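(* For every prime power $q$ of characteristic $p\ge3$, the number $J_{\mathrm{L}}(q)$ of distinct $j$-invariants of the Legendre curves $E_{\mathrm{L},u}$, $u\in\mathbb{F}_q\setminus\{0,1\}$, equals $\left\lfloor\frac{q+5}{6}\right\rfloor$.
   Context: For $u\in\mathbb{F}_q\setminus\{0,1\}$ ($q$ odd), $E_{\mathrm{L},u}$ is the elliptic curve $Y^2=X(X-1)(X-u)$ over $\mathbb{F}_q$, with $j$-invariant $j(E_{\mathrm{L},u})=\frac{2^8(u^2-u+1)^3}{(u^2-u)^2}$. $J_{\mathrm{L}}(q)=\#\{j(E_{\mathrm{L},u}) : u\in\mathbb{F}_q\setminus\{0,1\}\}$, i.e. the number of $\overline{\mathbb{F}}_q$-isomorphism classes represented in this family. *)

(* Defs.v *)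
From HB Require Import structures.
From mathcomp Require Import all_boot all_order all_algebra all_field.
Set Implicit Arguments. Unset Strict Implicit. Unset Printing Implicit Defensive.
Import GRing.Theory.
Local Open Scope ring_scope.

(* j-invariant of the Legendre curve Y^2 = X(X-1)(X-u):
   j = 2^8 (u^2-u+1)^3 / (u^2-u)^2. *)
Definition jLegendre (F : fieldType) (u : F) : F :=
  2%:R ^+ 8 * (u ^+ 2 - u + 1) ^+ 3 / (u ^+ 2 - u) ^+ 2.

Definition JL (F : finFieldType) : nat :=
  #|[set jLegendre u | u in [set u : F | (u != 0) && (u != 1)]]|.

(* Main.v *)
Require Import Defs.
From HB Require Import structures.
From mathcomp Require Import all_boot all_order all_algebra all_field.
From mathcomp Require Import ring zify.
Import GRing.Theory.
Local Open Scope ring_scope.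

Definition orb {F : fieldType} (u : F) : seq F :=
  [:: u; 1 - u; u^-1; (1 - u)^-1; u / (u - 1); (u - 1) / u].

Lemma neqE (F : fieldType) (x y a b : F) : b != 0 -> a != 0 -> x - y = a / b -> x != y.
Proof.
move=> hb ha E; apply/eqP => Exy; move: E; rewrite Exy subrr => /esym/eqP.
by rewrite mulf_eq0 invr_eq0 (negbTE ha) (negbTE hb).
Qed.

Lemma solve_lin (F : fieldType) (a b v : F) : a != 0 -> (a * v - b == 0) = (v == b / a).
Proof.
move=> ha; apply/eqP/eqP => [E|->]; last by rewrite mulrC divfK // subrr.
have E' : a * v = b by apply/eqP; rewrite -subr_eq0 E.
by rewrite -E' mulrC mulKf.
Qed.

Lemma jeq (F : fieldType) (h2 : 2%:R != 0 :> F) (u v : F) :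
  u != 0 -> u - 1 != 0 -> v != 0 -> v - 1 != 0 ->
  (jLegendre v == jLegendre u) = (v \in orb u).
Proof.
move=> u0 u1 v0 v1.
have hA : u ^+ 2 - u != 0 by rewrite (_ : u ^+ 2 - u = u * (u - 1)); [rewrite mulf_neq0 | ring].
have hB : v ^+ 2 - v != 0 by rewrite (_ : v ^+ 2 - v = v * (v - 1)); [rewrite mulf_neq0 | ring].
have h8 : (2%:R : F) ^+ 8 != 0 by rewrite expf_neq0.
have -> : (jLegendre v == jLegendre u) =
   ((v-u)*(v-1+u)*(u*v-1)*((1-u)*v-1)*((u-1)*v-u)*(u*v-u+1) == 0).
  have E : jLegendre v - jLegendre u = 2%:R ^+ 8 *
    (-((v-u)*(v-1+u)*(u*v-1)*((1-u)*v-1)*((u-1)*v-u)*(u*v-u+1))) /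
      ((u ^+ 2 - u) ^+ 2 * (v ^+ 2 - v) ^+ 2).
    by rewrite /jLegendre; field; rewrite hA hB.
  rewrite -subr_eq0 E mulf_eq0 invr_eq0 mulf_eq0 oppr_eq0 (negbTE h8) /=.
  by rewrite (negbTE (mulf_neq0 (expf_neq0 _ hA) (expf_neq0 _ hB))) orbF.
have u1' : 1 - u != 0 by rewrite -opprB oppr_eq0.
rewrite !mulf_eq0 !inE -!orbA.
have e1 : (v - u == 0) = (v == u) by rewrite subr_eq0.
have e2 : (v - 1 + u == 0) = (v == 1 - u).
  by rewrite (_ : v - 1 + u = v - (1 - u)) ?subr_eq0 //; ring.
have e3 : (u * v - 1 == 0) = (v == u^-1) by rewrite solve_lin // div1r.
have e4 : ((1 - u) * v - 1 == 0) = (v == (1 - u)^-1) by rewrite solve_lin // div1r.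
have e5 : ((u - 1) * v - u == 0) = (v == u / (u - 1)) by rewrite solve_lin.
have e6 : (u * v - u + 1 == 0) = (v == (u - 1) / u).
  by rewrite (_ : u * v - u + 1 = u * v - (u - 1)) ?solve_lin //; ring.
by rewrite e1 e2 e3 e4 e5 e6.
Qed.

Ltac fld := field; do ?[apply/andP; split]; try done; try (rewrite oppr_eq0 ?oner_eq0; done).

Lemma nz (F : fieldType) (x a b : F) : b != 0 -> a != 0 -> x = a / b -> x != 0.
Proof. by move=> hb ha E; apply: (@neqE _ x 0 a b hb ha); rewrite subr0. Qed.

Arguments nz {F x} a b _ _ _.
Arguments neqE {F x y} a b _ _ _.

Lemma by_rel (F : fieldType) (x y k e : F) : e = 0 -> x - y = k * e -> x = y.
Proof. by move=> he; rewrite he mulr0 => /eqP; rewrite subr_eq0 => /eqP. Qed.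

Arguments by_rel {F x y} k {e} _ _.

Lemma card_eqi (F : finFieldType) (s t : seq F) : s =i t -> uniq t -> #|s| = size t.
Proof. by move=> H Ut; rewrite (eq_card H); apply/card_uniqP. Qed.

Lemma orbD (F : fieldType) (u : F) : u != 0 -> u - 1 != 0 ->
  forall v, v \in orb u -> (v != 0) && (v - 1 != 0).
Proof.
move=> u0 u1 v; have u1' : 1 - u != 0 by rewrite -opprB oppr_eq0.
rewrite !inE.
case/orP => [/eqP->|/orP[/eqP->|/orP[/eqP->|/orP[/eqP->|/orP[/eqP->|/eqP->]]]]];
  apply/andP; split => //.
- by rewrite (_ : 1 - u - 1 = - u) ?oppr_eq0 //; ring.
- by rewrite invr_eq0.
- by apply: (nz (1 - u) (u)) => //; fld.
- by rewrite invr_eq0.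
- by apply: (nz (u) (1 - u)) => //; fld.
- by apply: (nz (u) (u - 1)) => //; fld.
- by apply: (nz (1) (u - 1)) => //; [rewrite oner_eq0 | fld].
- by apply: (nz (u - 1) (u)) => //; fld.
- by apply: (nz (-1) (u)) => //; [rewrite oppr_eq0 oner_eq0 | fld].
Qed.

Lemma orb_uniq (F : fieldType) (u : F) : u != 0 -> u - 1 != 0 -> u + 1 != 0 ->
  u - 2%:R != 0 -> 2%:R * u - 1 != 0 -> u ^+ 2 - u + 1 != 0 -> uniq (orb u).
Proof.
move=> h0 h1 hm h2u hh hP.
have h1' : 1 - u != 0 by rewrite -opprB oppr_eq0.
have h0' : - u != 0 by rewrite oppr_eq0.
have hu1 : u * (u - 1) != 0 by rewrite mulf_neq0.
have hu1' : u * (1 - u) != 0 by rewrite mulf_neq0.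
have hsu : u * (u - 2%:R) != 0 by rewrite mulf_neq0.
have hm1 : (u - 1) * (u + 1) != 0 by rewrite mulf_neq0.
have hm1' : (1 - u) * (u + 1) != 0 by rewrite mulf_neq0.
have one0 : (1 : F) != 0 by rewrite oner_eq0.
have f1 : u != 1 - u.
 apply: (neqE (2%:R * u - 1) (1)) => //; fld.
have f2 : u != u^-1 by apply: (neqE ((u - 1) * (u + 1)) (u)) => //; fld.
have f3 : u != (1 - u)^-1.
 apply: (neqE (u ^+ 2 - u + 1) (u - 1)) => //. fld.
have f4 : u != u / (u - 1) by apply: (neqE (u * (u - 2%:R)) (u - 1)) => //; fld.
have f5 : u != (u - 1) / u by apply: (neqE (u ^+ 2 - u + 1) (u)) => //; fld.
have f6 : 1 - u != u^-1 by apply: (neqE (u ^+ 2 - u + 1) (- u)) => //; fld.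
have f7 : 1 - u != (1 - u)^-1 by apply: (neqE (u * (u - 2%:R)) (1 - u)) => //; fld.
have f8 : 1 - u != u / (u - 1) by apply: (neqE (u ^+ 2 - u + 1) (1 - u)) => //; fld.
have f9 : 1 - u != (u - 1) / u by apply: (neqE ((1 - u) * (u + 1)) (u)) => //; fld.
have f10 : u^-1 != (1 - u)^-1 by apply: (neqE (2%:R * u - 1) (u * (u - 1))) => //; fld.
have f11 : u^-1 != u / (u - 1) by apply: (neqE (u ^+ 2 - u + 1) (u * (1 - u))) => //; fld.
have f12 : u^-1 != (u - 1) / u by apply: (neqE (u - 2%:R) (- u)) => //; fld.
have f13 : (1 - u)^-1 != u / (u - 1) by apply: (neqE (u + 1) (1 - u)) => //; fld.
have f14 : (1 - u)^-1 != (u - 1) / u by apply: (neqE (u ^+ 2 - u + 1) (u * (1 - u))) => //; fld.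
have f15 : u / (u - 1) != (u - 1) / u by apply: (neqE (2%:R * u - 1) (u * (u - 1))) => //; fld.
rewrite /orb /= !inE !negb_or.
by rewrite f1 f2 f3 f4 f5 f6 f7 f8 f9 f10 f11 f12 f13 f14 f15.
Qed.

Definition wt {F : finFieldType} (u : F) : nat :=
  addn (addn (addn (addn 1 (u == -1)) (u == 2%:R)) (u == 2%:R^-1)) (muln 2 (u ^+ 2 - u + 1 == 0)).

Lemma card_orb (F : finFieldType) (u : F) : 2%:R != 0 :> F -> u != 0 -> u - 1 != 0 ->
  (#|orb u| * wt u = 6)%N.
Proof.
move=> h2 u0 u1.
have u1' : 1 - u != 0 by rewrite -opprB oppr_eq0.
have one0 : (1 : F) != 0 by rewrite oner_eq0.
have [t3|n3] := eqVneq (3%:R : F) 0.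
  have e2 : 2%:R = -1 :> F by apply: (by_rel (1) t3); ring.
  have e2i : 2%:R^-1 = -1 :> F by rewrite e2 invrN1.
  have eP : u^+2 - u + 1 = (u + 1)^+2 by apply: (by_rel (-u) t3); ring.
  have [eu|um] := eqVneq u (-1).
    subst u.
    have a1 : 1 - -1 = -1 :> F by apply: (by_rel (1) t3); ring.
    have a2 : -1 - 1 = 1 :> F by apply: (by_rel (-1) t3); ring.
    have -> : orb (-1 : F) = [:: -1; -1; -1; -1; -1; -1].
      by rewrite /orb a1 a2 !invrN1 divr1 mul1r.
    rewrite /wt e2 invrN1 eqxx eP addNr expr0n eqxx.
    rewrite (@card_eqi _ _ [:: -1]) // => x.
    by rewrite !inE !orbb.
  have hm : u + 1 != 0 by rewrite addr_eq0.
  rewrite /wt e2 invrN1 eP (negbTE um) expf_eq0 /= (negbTE hm) /= muln1.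
  apply/card_uniqP; apply: orb_uniq => //.
  - by rewrite e2 opprK.
  - by rewrite e2 (_ : -1 * u - 1 = -(u+1)) ?oppr_eq0 //; ring.
  - by rewrite eP expf_neq0.
have d12 : (-1 : F) != 2%:R by apply: (neqE (- 3%:R) 1) => //; [rewrite oppr_eq0 | fld].
have d13 : (-1 : F) != 2%:R^-1 by apply: (neqE (- 3%:R) 2%:R) => //; [rewrite oppr_eq0 | fld].
have d23 : (2%:R : F) != 2%:R^-1 by apply: (neqE (3%:R) 2%:R) => //; fld.
have Pm : (-1 : F) ^+ 2 - -1 + 1 != 0 by apply: (nz 3%:R 1) => //; fld.
have P2 : (2%:R : F) ^+ 2 - 2%:R + 1 != 0 by apply: (nz 3%:R 1) => //; fld.
have h4 : (2%:R * 2%:R : F) != 0 by rewrite mulf_neq0.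
have h4n : (4%:R : F) != 0 by rewrite (_ : 4%:R = 2%:R * 2%:R :> F) // -natrM.
have Ph : (2%:R^-1 : F) ^+ 2 - 2%:R^-1 + 1 != 0 by apply: (nz 3%:R (2%:R * 2%:R)) => //; fld.
have hn2 : - 2%:R != 0 :> F by rewrite oppr_eq0.
have c3 : #|[:: -1; 2%:R; 2%:R^-1] : seq F| = 3%N.
  by apply/card_uniqP; rewrite /= !inE !negb_or d12 d13 d23.
have [eu|um] := eqVneq u (-1).
  subst u.
  rewrite /wt eqxx (negbTE d12) (negbTE d13) (negbTE Pm) muln0 addn0 addn0.
  have -> : orb (-1 : F) = [:: -1; 2%:R; -1; 2%:R^-1; 2%:R^-1; 2%:R].
    by rewrite /orb; congr (_ :: _ :: _ :: _ :: _ :: _ :: _); fld.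
  rewrite (eq_card (_ : _ =i [:: -1; 2%:R; 2%:R^-1])) ?c3 // => x.
  by rewrite !inE; case: (x == -1); case: (x == 2%:R); case: (x == 2%:R^-1).
have [eu|u2] := eqVneq u 2%:R.
  subst u.
  rewrite /wt eqxx (negbTE um) (negbTE d23) (negbTE P2) muln0 addn0.
  have -> : orb (2%:R : F) = [:: 2%:R; -1; 2%:R^-1; -1; 2%:R; 2%:R^-1].
    by rewrite /orb; congr (_ :: _ :: _ :: _ :: _ :: _ :: _); fld.
  rewrite (eq_card (_ : _ =i [:: -1; 2%:R; 2%:R^-1])) ?c3 // => x.
  by rewrite !inE; case: (x == -1); case: (x == 2%:R); case: (x == 2%:R^-1).
have [eu|uh] := eqVneq u 2%:R^-1.
  subst u.
  rewrite /wt eqxx (negbTE um) (negbTE u2) (negbTE Ph) muln0 addn0.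
  have -> : orb (2%:R^-1 : F) = [:: 2%:R^-1; 2%:R^-1; 2%:R; 2%:R; -1; -1].
    by rewrite /orb; congr (_ :: _ :: _ :: _ :: _ :: _ :: _); fld.
  rewrite (eq_card (_ : _ =i [:: -1; 2%:R; 2%:R^-1])) ?c3 // => x.
  by rewrite !inE; case: (x == -1); case: (x == 2%:R); case: (x == 2%:R^-1).
have hh : 2%:R * u - 1 != 0.
  apply: (nz (2%:R * (u - 2%:R^-1)) 1) => //.
    by rewrite mulf_neq0 // subr_eq0.
  fld.
have hm : u + 1 != 0 by rewrite addr_eq0.
have hu2 : u - 2%:R != 0 by rewrite subr_eq0.
rewrite /wt (negbTE um) (negbTE u2) (negbTE uh).
have [eP|nP] := eqVneq (u ^+ 2 - u + 1) 0.
  have -> : orb u = [:: u; 1 - u; 1 - u; u; 1 - u; u].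
    rewrite /orb; congr (_ :: _ :: _ :: _ :: _ :: _ :: _).
    - by apply: mulr1_eq; apply: (by_rel (-1) eP); ring.
    - by apply: mulr1_eq; apply: (by_rel (-1) eP); ring.
    - by apply: (by_rel ((u - 1)^-1) eP); fld.
    - by apply: (by_rel (- u^-1) eP); fld.
  rewrite (@card_eqi _ _ [:: u; 1 - u]) //.
    by move=> x; rewrite !inE; case: (x == u); case: (x == 1 - u).
  rewrite /= !inE andbT.
  by apply: (neqE (2%:R * u - 1) 1) => //; fld.
by rewrite (card_uniqP (@orb_uniq _ u u0 u1 hm hu2 hh nP)).
Qed.


Lemma sum_bool (T : finType) (A P : pred T) :
  (\sum_(i in A) (P i : nat) = #|[pred i in A | P i]|)%N.
Proof.
rewrite -sum1_card [RHS](eq_bigl (fun i => (i \in A) && P i)) // [RHS]big_mkcondr.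
by apply: eq_bigr => i _; case: (P i).
Qed.

Lemma sum_pt (T : finType) (A : pred T) (a : T) : a \in A ->
  (\sum_(i in A) (i == a : nat) = 1)%N.
Proof.
move=> aA; rewrite (bigD1 a) //= eqxx big1 // => i /andP[_ /negbTE ->] //.
Qed.

From mathcomp Require Import zify.

Theorem mainTheorem4 (F : finFieldType) (p : nat) :
  prime p -> (3 <= p)%N -> (p \in [pchar F])%R ->
  JL F = ((#|F| + 5) %/ 6)%N.
Proof.
move=> hp hp3 hc.
have h2 : 2%:R != 0 :> F.
  rewrite -(dvdn_pcharf hc); apply/negP => /(dvdn_leq (isT : (0 < 2)%N)) => H.
  lia.
rewrite /JL; set D := [set u : F | _].
have Din u : (u \in D) = (u != 0) && (u - 1 != 0) by rewrite inE subr_eq0.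
have key u : u \in D ->
    (#|[set v in D | jLegendre v == jLegendre u]| * wt u = 6)%N.
  rewrite Din => /andP[u0 u1].
  rewrite -(@card_orb _ u h2 u0 u1); congr (_ * _)%N; apply: eq_card => v; rewrite inE.
  case vD: (v \in D).
    by move: vD; rewrite Din => /andP[v0 v1] /=; rewrite jeq.
  apply/esym/negbTE/negP => vo; have := @orbD _ u u0 u1 v vo.
  by rewrite -Din vD.
have S6 : (#|[set jLegendre u | u in D]| * 6 = \sum_(u in D) wt u)%N.
  rewrite (partition_big (fun u => jLegendre u) (fun y => y \in [set jLegendre u | u in D])) /=;
    last by move=> u uD; apply: imset_f.
  rewrite -sum_nat_const; apply: eq_bigr => y /imsetP [u0 uD ->].
  have K0 := key u0 uD.
  have cpos : (0 < #|[set v in D | jLegendre v == jLegendre u0]|)%N.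
    by move: K0; case: (#|_|).
  rewrite (eq_bigr (fun=> (wt u0 * 1)%N)); last first.
    move=> i /andP[iD /eqP ji]; have Ki := key i iD.
    rewrite muln1; apply/eqP; rewrite -(eqn_pmul2l cpos) K0 -Ki.
    suff -> : [set v in D | jLegendre v == jLegendre i] =
              [set v in D | jLegendre v == jLegendre u0] by [].
    by apply/setP => v; rewrite !inE ji.
  rewrite -big_distrr /= sum1_card -K0 mulnC; congr (_ * _)%N.
  by apply: eq_card => v; rewrite [LHS]inE.
have m1D : (-1 : F) \in D.
  by rewrite Din oppr_eq0 oner_eq0 /= (_ : -1 - 1 = - 2%:R :> F) ?oppr_eq0 //; ring.
have twoD : (2%:R : F) \in D by rewrite Din h2 (_ : 2%:R - 1 = 1 :> F) ?oner_eq0 //; ring.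
have hD : (2%:R^-1 : F) \in D.
  rewrite Din invr_eq0 h2 /=; apply: (nz (-1) 2%:R) => //; [by rewrite oppr_eq0 oner_eq0|fld].
have Ssum : (\sum_(u in D) wt u =
     #|D| + 3 + 2 * #|[pred u in D | (u ^+ 2 - u + 1 == 0)%R]|)%N.
  rewrite /wt !big_split /= sum1_card (@sum_pt _ _ _ m1D) (@sum_pt _ _ _ twoD) (@sum_pt _ _ _ hD).
  rewrite !sum_bool big1 // addn0 mul2n -addnn -!addnA; do 3!congr (_ + _)%N.
have cD : (#|D| + 2 = #|F|)%N.
  have -> : D = ~: [set 0; 1] by apply/setP => x; rewrite !inE negb_or.
  have := cardsC [set (0 : F); 1]; rewrite cards2 eq_sym oner_eq0 /= => <-; by rewrite addnC.
have r2 : (#|[pred u in D | (u ^+ 2 - u + 1 == 0)%R]| <= 2)%N.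
  case: (pickP [pred u in D | u ^+ 2 - u + 1 == 0]) => [a Ha|none]; last first.
    by rewrite (eq_card0 none).
  move: Ha => /andP[_ /eqP Pa].
  apply: (leq_trans (n := #|[set a; 1 - a]|)).
    apply: subset_leq_card; apply/subsetP => x /andP[_ /eqP Px].
    have : (x - a) * (x - (1 - a)) == 0.
      have E : (x - a) * (x - (1 - a)) = (x ^+ 2 - x + 1) - (a ^+ 2 - a + 1) by ring.
      by rewrite E Px Pa subrr.
    by rewrite mulf_eq0 !subr_eq0 !inE.
  by rewrite cards2; case: (a != 1 - a).
lia.
Qed.
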